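(* Let $G=(V,E,\mu,\omega)$ be a weighted graph with a fixed reference vertex $p\in V$, and suppose there exist constants $D>0$ and $0\le\alpha\le 2$ such that $\mathrm{Deg}(x)\le D\,d(x,p)^{\alpha}$ for all $x\in V$, $x\neq p$. Let $T\in(0,\infty]$. Suppose $u,v\in\mathcal{M}_T$ are both solutions of the wave equation on $(-T,T)\times V$ with the same data $f,g,h$, i.e. $u,v\in C^2_t((-T,T)\times V)$ and for $w\in\{u,v\}$: $$\partial_t^2 w(t,x)-\Delta w(t,x)=f(t,x)\ \ ((t,x)\in(-T,T)\times V),\qquad w(0,x)=g(x),\ \ \partial_t w(0,x)=h(x)\ \ (x\in V),$$ where $f\in C^0_t((-T,T)\times V)$ and $g,h:V\to\mathbb{R}$. Then $u\equiv v$.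
   Context: A weighted graph $G=(V,E,\mu,\omega)$ consists of a locally finite, connected, simple, undirected graph $(V,E)$, a symmetric edge weight $\omega:E\to(0,\infty)$, $\{x,y\}\mapsto\omega_{xy}=\omega_{yx}$, and a vertex weight $\mu:V\to(0,\infty)$. Write $x\sim y$ if $\{x,y\}\in E$; $d(x,y)$ is the combinatorial graph distance. The Laplacian is $\Delta f(x)=\sum_{y\sim x}\frac{\omega_{xy}}{\mu_x}(f(y)-f(x))$ for $f:V\to\mathbb{R}$, and the weighted degree is $\mathrm{Deg}(x)=\sum_{y\sim x}\frac{\omega_{xy}}{\mu_x}$. For an interval $I$ and $k\in\mathbb{N}_0\cup\{\infty\}$, $u\in C^k_t(I\times V)$ means $u:I\times V\to\mathbb{R}$ and $u(\cdot,x)\in C^k(I)$ for every $x\in V$; $\Delta$ acts in the space variable. For $T\in(0,\infty]$, $\mathcal{M}_T$ is the class of functions $u:(-T,T)\times V\to\mathbb{R}$ for which there is a constant $C$ with $|u(t,x)|\le C\,d(x,p)^{(2-\alpha)d(x,p)}$ for all $(t,x)\in(-T,T)\times V$, $x\neq p$ (with $\alpha$ the exponent in the degree growth condition). *)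

(* Defs.v *)
From Stdlib Require Import Reals List.
From Coquelicot Require Import Coquelicot.
Open Scope R_scope.

(* Local finiteness: the neighbours of x are
   exactly the (duplicate-free) finite list [nbrs x]. *)
Inductive walk {V : Type} (nbrs : V -> list V) : nat -> V -> V -> Prop :=
  | walk0 : forall x, walk nbrs 0 x x
  | walkS : forall n x y z, In y (nbrs x) -> walk nbrs n y z -> walk nbrs (S n) x z.

Record wgraph := {
  V : Type;
  nbrs : V -> list V;
  nbrs_nodup : forall x, NoDup (nbrs x);
  nbrs_sym : forall x y, In y (nbrs x) -> In x (nbrs y);
  nbrs_irrefl : forall x, ~ In x (nbrs x);
  connected : forall x y, exists n, walk nbrs n x y;
  omega : V -> V -> R;
  omega_sym : forall x y, In y (nbrs x) -> omega x y = omega y x;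
  omega_pos : forall x y, In y (nbrs x) -> 0 < omega x y;
  mu : V -> R;
  mu_pos : forall x, 0 < mu x
}.

Arguments nbrs {_}.
Arguments omega {_}.
Arguments mu {_}.

Definition adj (G : wgraph) (x y : V G) : Prop := In y (nbrs x).

Definition is_dist (G : wgraph) (x y : V G) (n : nat) : Prop :=
  walk nbrs n x y /\ forall m, walk nbrs m x y -> (n <= m)%nat.

Definition Lap (G : wgraph) (f : V G -> R) (x : V G) : R :=
  fold_right Rplus 0 (map (fun y => omega x y / mu x * (f y - f x)) (nbrs x)).

Definition Deg (G : wgraph) (x : V G) : R :=
  fold_right Rplus 0 (map (fun y => omega x y / mu x) (nbrs x)).

Definition inI (T : Rbar) (t : R) : Prop :=
  Rbar_lt (Rbar_opp T) t /\ Rbar_lt t T.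

Definition C0t (G : wgraph) (T : Rbar) (u : R -> V G -> R) : Prop :=
  forall x t, inI T t -> continuous (fun s => u s x) t.

Definition C2t (G : wgraph) (T : Rbar) (u : R -> V G -> R) : Prop :=
  forall x t, inI T t ->
    ex_derive (fun s => u s x) t /\
    ex_derive (Derive (fun s => u s x)) t /\
    continuous (Derive_n (fun s => u s x) 2) t.

Definition MT (G : wgraph) (p : V G) (alpha : R) (T : Rbar)
  (u : R -> V G -> R) : Prop :=
  exists C : R, forall t x n, inI T t -> x <> p -> is_dist G x p n ->
    Rabs (u t x) <= C * Rpower (INR n) ((2 - alpha) * INR n).

Definition wave_sol (G : wgraph) (T : Rbar) (f : R -> V G -> R)
  (g h : V G -> R) (w : R -> V G -> R) : Prop :=
  C2t G T w /\
  (forall t x, inI T t ->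
     Derive_n (fun s => w s x) 2 t - Lap G (w t) x = f t x) /\
  (forall x, w 0 x = g x) /\
  (forall x, Derive (fun s => w s x) 0 = h x).

(* Main.v *)
Require Import Defs.
From Stdlib Require Import Reals List Lra Lia Psatz Classical.
From Coquelicot Require Import Coquelicot.
Open Scope R_scope.


Lemma between_sub (s0 s c r : R) :
  Rmin s0 s <= c <= Rmax s0 s -> Rmin s0 c <= r <= Rmax s0 c ->
  Rmin s0 s <= r <= Rmax s0 s.
Proof. unfold Rmin, Rmax; repeat destruct Rle_dec; lra. Qed.

Lemma between_sign (s0 s c : R) :
  Rmin s0 s <= c <= Rmax s0 s -> 0 <= (c - s0) * (s - s0).
Proof. unfold Rmin, Rmax; destruct Rle_dec; intros; nra. Qed.

Lemma convex_nonneg (F F1 F2 : R -> R) (s0 s : R) :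
  (forall r, Rmin s0 s <= r <= Rmax s0 s ->
     is_derive F r (F1 r) /\ is_derive F1 r (F2 r) /\ 0 <= F2 r) ->
  F s0 = 0 -> F1 s0 = 0 -> 0 <= F s.
Proof.
  intros H H0 H1.
  destruct (MVT_gen F s0 s F1) as [c [Hc Hm]].
  - intros r Hr; apply H; lra.
  - intros r Hr; apply continuity_pt_filterlim; apply (ex_derive_continuous (K:=R_AbsRing) (V:=R_NormedModule) F);
      eexists; apply H; auto.
  - destruct (MVT_gen F1 s0 c F2) as [c' [Hc' Hm']].
    + intros r Hr; apply H; apply (between_sub s0 s c); auto; lra.
    + intros r Hr; apply continuity_pt_filterlim; apply (ex_derive_continuous (K:=R_AbsRing) (V:=R_NormedModule) F1);
      eexists; apply H; apply (between_sub s0 s c); auto.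
    + assert (HF2 : 0 <= F2 c') by (apply H; apply (between_sub s0 s c); auto).
      pose proof (between_sign s0 s c Hc).
      rewrite H0 in Hm; rewrite H1 in Hm'.
      assert (F s = F2 c' * ((c - s0) * (s - s0))) by nra.
      rewrite H3; apply Rmult_le_pos; auto.
Qed.

Lemma compare (phi phi1 phi2 : R -> R) (s0 s K : R) (m : nat) :
  (forall r, Rmin s0 s <= r <= Rmax s0 s ->
     is_derive phi r (phi1 r) /\ is_derive phi1 r (phi2 r) /\
     Rabs (phi2 r) <= K * (r - s0) ^ (2 * m)) ->
  phi s0 = 0 -> phi1 s0 = 0 ->
  Rabs (phi s) <= K * (s - s0) ^ (2 * m + 2) / (INR (2 * m + 1) * INR (2 * m + 2)).
Proof.
  intros H H0 H1.
  set (h := fun r => K * (r - s0) ^ (2 * m + 2) / (INR (2 * m + 1) * INR (2 * m + 2))).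
  set (h1 := fun r => K * (r - s0) ^ (2 * m + 1) / INR (2 * m + 1)).
  set (h2 := fun r => K * (r - s0) ^ (2 * m)).
  assert (P1 : 0 < INR (2 * m + 1)) by (apply lt_0_INR; lia).
  assert (P2 : 0 < INR (2 * m + 2)) by (apply lt_0_INR; lia).
  assert (Dh : forall r, is_derive h r (h1 r)).
  { intro r; unfold h, h1. auto_derive; auto. change (m + (m+0))%nat with (2*m)%nat.
    replace (Init.Nat.pred (2 * m + 2)) with (2 * m + 1)%nat by lia. unfold Rminus; field; lra. }
  assert (Dh1 : forall r, is_derive h1 r (h2 r)).
  { intro r; unfold h1, h2. auto_derive; auto. change (m + (m+0))%nat with (2*m)%nat.
    replace (Init.Nat.pred (2 * m + 1)) with (2 * m)%nat by lia. unfold Rminus; field; lra. }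
  assert (h0 : h s0 = 0) by (unfold h; rewrite Rminus_diag, pow_i by lia; field; lra).
  assert (h10 : h1 s0 = 0) by (unfold h1; rewrite Rminus_diag, pow_i by lia; field; lra).
  assert (A : 0 <= h s - phi s).
  { apply (convex_nonneg (fun r => h r - phi r) (fun r => h1 r - phi1 r)
                          (fun r => h2 r - phi2 r) s0 s).
    - intros r Hr; destruct (H r Hr) as [D1 [D2 B]]; refine (conj _ (conj _ _)).
      + exact (is_derive_minus _ _ _ _ _ (Dh r) D1).
      + exact (is_derive_minus _ _ _ _ _ (Dh1 r) D2).
      + unfold h2; pose proof (Rle_abs (phi2 r)); lra.
    - rewrite h0, H0; ring.
    - rewrite h10, H1; ring. }
  assert (A' : 0 <= h s + phi s).
  { apply (convex_nonneg (fun r => h r + phi r) (fun r => h1 r + phi1 r)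
                          (fun r => h2 r + phi2 r) s0 s).
    - intros r Hr; destruct (H r Hr) as [D1 [D2 B]]; refine (conj _ (conj _ _)).
      + exact (is_derive_plus _ _ _ _ _ (Dh r) D1).
      + exact (is_derive_plus _ _ _ _ _ (Dh1 r) D2).
      + unfold h2; pose proof (Rle_abs (- phi2 r)); rewrite Rabs_Ropp in H2; lra.
    - rewrite h0, H0; ring.
    - rewrite h10, H1; ring. }
  unfold h in A, A'. apply Rabs_le; lra.
Qed.

Lemma Lap_minus (G : wgraph) (f g : V G -> R) (x : V G) :
  Lap G (fun y => f y - g y) x = Lap G f x - Lap G g x.
Proof.
  unfold Lap. induction (nbrs x) as [|y l IH]; simpl; [ring|]. rewrite IH; ring.
Qed.

Lemma Deg_nonneg (G : wgraph) (x : V G) : 0 <= Deg G x.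
Proof.
  unfold Deg. assert (Hl : forall y, In y (nbrs x) -> In y (nbrs x)) by auto.
  revert Hl. generalize (nbrs x) at 1 3. intros l; induction l as [|y l IH]; simpl; intros Hl; [lra|].
  assert (0 < omega x y / mu x).
  { apply Rdiv_lt_0_compat; [apply omega_pos; auto | apply mu_pos]. }
  assert (0 <= fold_right Rplus 0 (map (fun y0 : V G => omega x y0 / mu x) l)) by (apply IH; auto).
  lra.
Qed.

Lemma Lap_bound (G : wgraph) (f : V G -> R) (x : V G) (M : R) :
  (forall y, In y (nbrs x) -> Rabs (f y) <= M) -> Rabs (f x) <= M ->
  Rabs (Lap G f x) <= 2 * M * Deg G x.
Proof.
  intros Hy Hx. unfold Lap, Deg.
  assert (Hl : forall y, In y (nbrs x) -> In y (nbrs x)) by auto.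
  revert Hl. generalize (nbrs x) at 1 3 4. intros l; induction l as [|y l IH]; simpl; intros Hl.
  - rewrite Rabs_R0; lra.
  - assert (P : 0 < omega x y / mu x).
    { apply Rdiv_lt_0_compat; [apply omega_pos; auto | apply mu_pos]. }
    assert (IH' := IH (fun z Hz => Hl z (or_intror Hz))).
    eapply Rle_trans; [apply Rabs_triang|].
    rewrite Rabs_mult, (Rabs_right (omega x y / mu x)) by lra.
    assert (Rabs (f y - f x) <= 2 * M).
    { eapply Rle_trans; [apply Rabs_triang|]. rewrite Rabs_Ropp.
      pose proof (Hy y (Hl y (or_introl eq_refl))); lra. }
    nra.
Qed.

Lemma walk_step (G : wgraph) (x y p : V G) (n : nat) :
  In y (nbrs x) -> walk nbrs n x p -> walk nbrs (S n) y p.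
Proof. intros H W; apply walkS with x; auto; apply nbrs_sym; auto. Qed.

Lemma walk0_eq (G : wgraph) (x p : V G) : walk nbrs 0 x p -> x = p.
Proof. intros W; inversion W; auto. Qed.

Lemma walk_dist (G : wgraph) (x p : V G) (n : nat) :
  walk nbrs n x p -> exists d, (d <= n)%nat /\ is_dist G x p d.
Proof.
  induction n as [n IH] using (well_founded_induction Wf_nat.lt_wf). intros W.
  destruct (classic (exists m, (m < n)%nat /\ walk nbrs m x p)) as [[m [Hm Wm]]|Hn].
  - destruct (IH m Hm Wm) as [d [Hd Hdd]]. exists d; split; auto; lia.
  - exists n; split; auto. split; auto. intros m Wm.
    destruct (Nat.le_gt_cases n m); auto. exfalso; apply Hn; exists m; auto.
Qed.

Lemma exp_le_exp (x y : R) : x <= y -> exp x <= exp y.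
Proof. intros [H|H]; [left; apply exp_increasing; auto | rewrite H; lra]. Qed.

Lemma Rpow_mono (b1 b2 e1 e2 : R) :
  1 <= b1 <= b2 -> 0 <= e1 <= e2 -> Rpower b1 e1 <= Rpower b2 e2.
Proof.
  intros Hb He. unfold Rpower.
  destruct (Rle_lt_or_eq_dec _ _ (proj1 Hb)) as [Hlt|Heq].
  - assert (0 < ln b1) by (rewrite <- ln_1; apply ln_increasing; lra).
    assert (ln b1 <= ln b2).
    { destruct (Rle_lt_or_eq_dec _ _ (proj2 Hb)) as [H2|H2].
      - left; apply ln_increasing; lra.
      - rewrite H2; lra. }
    apply exp_le_exp; nra.
  - subst b1. rewrite ln_1, Rmult_0_r.
    assert (0 <= ln b2).
    { destruct (Rle_lt_or_eq_dec _ _ (proj2 Hb)) as [H2|H2].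
      - rewrite <- ln_1; left; apply ln_increasing; lra.
      - rewrite <- H2, ln_1; lra. }
    apply exp_le_exp; nra.
Qed.

Lemma Rpow_ge1 (b e : R) : 1 <= b -> 0 <= e -> 1 <= Rpower b e.
Proof.
  intros. replace 1 with (Rpower 1 0) at 1 by (unfold Rpower; rewrite Rmult_0_l; apply exp_0).
  apply Rpow_mono; lra.
Qed.

Lemma Rpow_pos (b e : R) : 0 < Rpower b e.
Proof. unfold Rpower; apply exp_pos. Qed.

Lemma exp_pow_mult (a : R) (m : nat) : exp a ^ m = exp (INR m * a).
Proof.
  induction m as [|m IH]; simpl pow.
  - simpl; rewrite Rmult_0_l, exp_0; ring.
  - rewrite IH, S_INR, <- exp_plus; f_equal; ring.
Qed.

Lemma pow_le_fact (m : nat) : INR m ^ m <= exp 1 ^ m * INR (Factorial.fact m).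
Proof.
  induction m as [|m IH].
  - simpl; lra.
  - rewrite fact_simpl, mult_INR.
    assert (E1 : 2 <= exp 1) by (pose proof (exp_ineq1_le 1); lra).
    destruct m as [|m'].
    + simpl; lra.
    + set (m := S m') in *.
      assert (Hm : 1 <= INR m) by (apply (le_INR 1); unfold m; lia).
      assert (A : INR (S m) ^ m <= INR m ^ m * exp 1).
      { replace (INR (S m)) with (INR m * (1 + / INR m)) by (rewrite S_INR; field; lra).
        rewrite Rpow_mult_distr. apply Rmult_le_compat_l.
        - apply pow_le; lra.
        - replace (exp 1) with (exp (/ INR m) ^ m).
          + apply pow_incr. split.
            * assert (0 < / INR m) by (apply Rinv_0_lt_compat; lra); lra.
            * apply exp_ineq1_le.
          + rewrite exp_pow_mult; f_equal; field; lra. }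
      change (INR (S m) * INR (S m) ^ m <= exp 1 * exp 1 ^ m * (INR (S m) * INR (Factorial.fact m))).
      assert (0 <= INR (S m)) by apply pos_INR.
      assert (0 < exp 1 ^ m) by (apply pow_lt; lra).
      apply Rle_trans with (INR (S m) * (INR m ^ m * exp 1)).
      * apply Rmult_le_compat_l; auto.
      * apply Rle_trans with (INR (S m) * (exp 1 ^ m * INR (Factorial.fact m) * exp 1)).
        -- apply Rmult_le_compat_l; auto. apply Rmult_le_compat_r; lra.
        -- right; ring.
Qed.

Lemma pow_le_exp (y : R) (m : nat) : 0 <= y -> y ^ m <= INR m ^ m * exp y.
Proof.
  intros Hy. destruct m as [|m'].
  - simpl. pose proof (exp_ineq1_le y); lra.
  - set (m := S m').
    assert (Hm : 1 <= INR m) by (apply (le_INR 1); unfold m; lia).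
    replace y with (INR m * (y / INR m)) at 1 by (field; lra).
    rewrite Rpow_mult_distr. apply Rmult_le_compat_l; [apply pow_le; lra|].
    replace (exp y) with (exp (y / INR m) ^ m) by (rewrite exp_pow_mult; f_equal; field; lra).
    apply pow_incr; split.
    + apply Rdiv_le_0_compat; lra.
    + pose proof (exp_ineq1_le (y / INR m)); lra.
Qed.

Lemma geom_zero (z c q : R) (N : nat) :
  0 <= q < 1 -> 0 <= c -> (forall k, (N <= k)%nat -> z <= c * q ^ k) -> z <= 0.
Proof.
  intros Hq Hc H. destruct (Rle_lt_dec z 0) as [|Hz]; auto. exfalso.
  destruct (pow_lt_1_zero q (ltac:(rewrite Rabs_right; lra)) (z / (c + 1)))
    as [N' HN'].
  { apply Rdiv_lt_0_compat; lra. }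
  specialize (HN' (Nat.max N N') ltac:(lia)). specialize (H (Nat.max N N') ltac:(lia)).
  rewrite Rabs_right in HN' by (apply Rle_ge, pow_le; lra).
  assert (c * q ^ Nat.max N N' <= c * (z / (c + 1))) by (apply Rmult_le_compat_l; lra).
  assert (c * (z / (c + 1)) < z).
  { apply Rmult_lt_reg_r with (c + 1); [lra|]. field_simplify; nra. }
  lra.
Qed.

Definition Gk (B D' alpha : R) (n k : nat) : R :=
  B * (2 * D') ^ k * (INR n + INR k + 1) ^ (2 * k) *
  Rpower (INR n + INR k + 1) ((2 - alpha) * INR n).

Lemma Gk_nonneg B D' alpha n k : 0 <= B -> 0 <= D' -> 0 <= Gk B D' alpha n k.
Proof.
  intros. unfold Gk. pose proof (pos_INR n); pose proof (pos_INR k).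
  pose proof (Rpow_pos (INR n + INR k + 1) ((2 - alpha) * INR n)).
  apply Rmult_le_pos; [|lra]. apply Rmult_le_pos; [apply Rmult_le_pos|]; auto;
  apply pow_le; lra.
Qed.

Lemma Gk_mono B D' alpha n k : 0 <= alpha <= 2 -> 0 <= B -> 0 <= D' ->
  Gk B D' alpha n k <= Gk B D' alpha (S n) k.
Proof.
  intros Ha HB HD. unfold Gk. rewrite S_INR.
  pose proof (pos_INR n); pose proof (pos_INR k).
  assert (0 <= B * (2 * D') ^ k) by (apply Rmult_le_pos; auto; apply pow_le; lra).
  apply Rmult_le_compat.
  - apply Rmult_le_pos; auto; apply pow_le; lra.
  - left; apply Rpow_pos.
  - apply Rmult_le_compat_l; auto. apply pow_incr; lra.
  - apply Rpow_mono; nra.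
Qed.

Lemma Gk_step B D' alpha n k dx : 0 <= alpha <= 2 -> 0 <= B -> 0 <= D' ->
  0 <= dx -> dx <= D' * Rpower (INR n + 1) alpha ->
  2 * dx * Gk B D' alpha (S n) k <= Gk B D' alpha n (S k).
Proof.
  intros Ha HB HD Hd Hdx. unfold Gk. rewrite !S_INR.
  pose proof (pos_INR n); pose proof (pos_INR k).
  set (X := INR n + INR k + 1 + 1).
  replace (INR n + 1 + INR k + 1) with X by (unfold X; ring).
  replace (INR n + (INR k + 1) + 1) with X by (unfold X; ring).
  assert (HX : 1 <= X) by (unfold X; lra).
  assert (dx <= D' * Rpower X alpha).
  { eapply Rle_trans; [apply Hdx|]. apply Rmult_le_compat_l; auto.
    apply Rpow_mono; unfold X; lra. }
  assert (Hsplit : Rpower X alpha * Rpower X ((2 - alpha) * (INR n + 1)) =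
                   X ^ 2 * Rpower X ((2 - alpha) * INR n)).
  { rewrite <- Rpower_plus, <- Rpower_pow by lra. rewrite <- Rpower_plus.
    f_equal. simpl; ring. }
  replace (2 * S k)%nat with (2 * k + 2)%nat by lia. rewrite pow_add.
  assert (0 <= B * (2 * D') ^ k * X ^ (2 * k)) by
    (apply Rmult_le_pos; [apply Rmult_le_pos|]; auto; apply pow_le; lra).
  pose proof (Rpow_pos X ((2 - alpha) * (INR n + 1))).
  apply Rle_trans with (2 * (D' * Rpower X alpha) *
     (B * (2 * D') ^ k * X ^ (2 * k) * Rpower X ((2 - alpha) * (INR n + 1)))).
  - apply Rmult_le_compat_r; [nra|]. lra.
  - right. simpl pow at 3. 
    replace (2 * (D' * Rpower X alpha) * (B * (2 * D') ^ k * X ^ (2 * k) *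
               Rpower X ((2 - alpha) * (INR n + 1))))
      with (2 * D' * (B * (2 * D') ^ k * X ^ (2 * k)) *
            (Rpower X alpha * Rpower X ((2 - alpha) * (INR n + 1)))) by ring.
    rewrite Hsplit. ring.
Qed.

Lemma even_pow_nonneg (x : R) (k : nat) : 0 <= x ^ (2 * k).
Proof. rewrite pow_mult. apply pow_le. nra. Qed.

Lemma core (G : wgraph) (p : V G) (a b B D' alpha : R) (w W1 : R -> V G -> R) :
  0 <= alpha <= 2 -> 0 <= B -> 0 <= D' ->
  (forall x r, a <= r <= b -> is_derive (fun s => w s x) r (W1 r x) /\
                              is_derive (fun s => W1 s x) r (Lap G (w r) x)) ->
  (forall x n r, walk nbrs n x p -> a <= r <= b ->
     Rabs (w r x) <= B * Rpower (INR n + 1) ((2 - alpha) * INR n)) ->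
  (forall x n, walk nbrs n x p -> Deg G x <= D' * Rpower (INR n + 1) alpha) ->
  forall s0, a <= s0 <= b -> (forall x, w s0 x = 0 /\ W1 s0 x = 0) ->
  forall k x n s, walk nbrs n x p -> a <= s <= b ->
    Rabs (w s x) <= Gk B D' alpha n k * (s - s0) ^ (2 * k) / INR (Factorial.fact (2 * k)).
Proof.
  intros Ha HB HD Hder Hbd Hdeg s0 Hs0 Hz k.
  induction k as [|k IH]; intros x n s W Hs.
  - unfold Gk. simpl. rewrite Rplus_0_r. 
    replace (B * 1 * 1 * Rpower (INR n + 1) ((2 - alpha) * INR n) * 1 / 1)
      with (B * Rpower (INR n + 1) ((2 - alpha) * INR n)) by field.
    apply Hbd with (n := n); auto.
  - assert (Fp : 0 < INR (Factorial.fact (2 * k))) by apply INR_fact_lt_0.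
    set (K := 2 * Deg G x * Gk B D' alpha (S n) k / INR (Factorial.fact (2 * k))).
    assert (Hc : Rabs (w s x) <= K * (s - s0) ^ (2 * k + 2) /
                   (INR (2 * k + 1) * INR (2 * k + 2))).
    { apply (compare (fun s => w s x) (fun s => W1 s x) (fun r => Lap G (w r) x)).
      - intros r Hr.
        assert (Hr' : a <= r <= b) by (revert Hr; unfold Rmin, Rmax; destruct Rle_dec; lra).
        destruct (Hder x r Hr') as [D1 D2]. split; [exact D1|]. split; [exact D2|].
        set (M := Gk B D' alpha (S n) k * (r - s0) ^ (2 * k) / INR (Factorial.fact (2 * k))).
        apply Rle_trans with (2 * M * Deg G x).
        + apply Lap_bound.
          * intros y Hy. apply IH; auto. apply walk_step with x; auto.
          * eapply Rle_trans; [apply IH; eauto|]. unfold M.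
            unfold Rdiv; apply Rmult_le_compat_r; [left; apply Rinv_0_lt_compat; auto|].
            apply Rmult_le_compat_r; [apply even_pow_nonneg|]. apply Gk_mono; auto.
        + right; unfold M, K; field; lra.
      - apply Hz.
      - apply Hz. }
    eapply Rle_trans; [exact Hc|].
    replace (2 * S k)%nat with (S (S (2 * k))) by lia.
    rewrite !fact_simpl, !mult_INR.
    replace (2 * k + 2)%nat with (S (S (2 * k))) by lia.
    replace (2 * k + 1)%nat with (S (2 * k)) by lia.
    assert (P1 : 0 < INR (S (2 * k))) by (apply lt_0_INR; lia).
    assert (P2 : 0 < INR (S (S (2 * k)))) by (apply lt_0_INR; lia).
    assert (E : 0 <= (s - s0) ^ S (S (2 * k))).
    { replace (S (S (2 * k))) with (2 * S k)%nat by lia. apply even_pow_nonneg. }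
    unfold K. unfold Rdiv.
    replace (2 * Deg G x * Gk B D' alpha (S n) k * / INR (Factorial.fact (2 * k)) *
       (s - s0) ^ S (S (2 * k)) * / (INR (S (2 * k)) * INR (S (S (2 * k)))))
      with ((2 * Deg G x * Gk B D' alpha (S n) k) * ((s - s0) ^ S (S (2 * k)) *
        / (INR (S (S (2 * k))) * (INR (S (2 * k)) * INR (Factorial.fact (2 * k))))))
      by (field; lra).
    replace (Gk B D' alpha n (S k) * (s - s0) ^ S (S (2 * k)) *
       / (INR (S (S (2 * k))) * (INR (S (2 * k)) * INR (Factorial.fact (2 * k)))))
      with (Gk B D' alpha n (S k) * ((s - s0) ^ S (S (2 * k)) *
       / (INR (S (S (2 * k))) * (INR (S (2 * k)) * INR (Factorial.fact (2 * k))))))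
      by ring.
    apply Rmult_le_compat_r.
    + apply Rmult_le_pos; auto. left; apply Rinv_0_lt_compat.
      apply Rmult_lt_0_compat; auto. apply Rmult_lt_0_compat; auto.
    + apply Gk_step; try apply Deg_nonneg; auto.
Qed.

Definition tau (D' : R) := / (2 * (D' + 1) * exp 1 ^ 4).

Lemma tau_facts (D' : R) : 0 <= D' ->
  0 < tau D' /\ 0 <= 2 * D' * exp 1 ^ 4 * tau D' ^ 2 < 1.
Proof.
  intros HD. assert (E1 : 1 <= exp 1) by (pose proof (exp_ineq1_le 1); lra).
  assert (E : 1 <= exp 1 ^ 4) by (apply pow_R1_Rle; lra).
  set (e := exp 1 ^ 4) in *.
  assert (Ht : tau D' * (2 * (D' + 1) * e) = 1) by (unfold tau; fold e; field; nra).
  assert (Tp : 0 < tau D') by (unfold tau; fold e; apply Rinv_0_lt_compat; nra).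


  split; auto. split.
  - assert (0 <= tau D' ^ 2) by (apply pow_le; lra). 
    apply Rmult_le_pos; [|auto]. nra.
  - assert (tau D' <= 1 / 2).
    { apply Rmult_le_reg_r with (2 * (D' + 1) * e); [nra|]. rewrite Ht. nra. }
    replace (2 * D' * e * tau D' ^ 2) with (D' * tau D' * (2 * e * tau D')) by ring.
    assert (2 * e * tau D' * (D' + 1) = 1) by (transitivity (tau D' * (2 * (D' + 1) * e)); [ring | exact Ht]).
    assert (D' * tau D' * (2 * e * tau D') < 1).
    { apply Rmult_lt_reg_r with (D' + 1); [lra|].
      replace (D' * tau D' * (2 * e * tau D') * (D' + 1)) with (D' * tau D' * (2 * e * tau D' * (D' + 1))) by ring.
      rewrite H0. nra. }
    lra.
Qed.

Lemma term_bound (B D' alpha t : R) (n k : nat) :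
  0 <= alpha <= 2 -> 0 <= B -> 0 <= D' -> 0 <= t -> (n + 1 <= k)%nat ->
  Gk B D' alpha n k * t ^ (2 * k) / INR (Factorial.fact (2 * k)) <=
  (B * INR (2 * n) ^ (2 * n)) * (2 * D' * exp 1 ^ 4 * t ^ 2) ^ k.
Proof.
  intros Ha HB HD Ht Hk. unfold Gk.
  pose proof (pos_INR n); pose proof (pos_INR k).
  assert (Fp : 0 < INR (Factorial.fact (2 * k))) by apply INR_fact_lt_0.
  set (X := INR n + INR k + 1).
  assert (HX : 1 <= X <= INR (2 * k)).
  { unfold X; split; [lra|]. rewrite mult_INR. replace (INR 2) with 2 by (simpl; ring).
    apply le_INR in Hk. rewrite plus_INR in Hk. simpl in Hk. lra. }
  assert (A1 : X ^ (2 * k) <= exp 1 ^ (2 * k) * INR (Factorial.fact (2 * k))).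
  { eapply Rle_trans; [apply pow_incr; split; [lra|apply HX]|]. apply pow_le_fact. }
  assert (A2 : Rpower X ((2 - alpha) * INR n) <= INR (2 * n) ^ (2 * n) * exp 1 ^ (2 * k)).
  { eapply Rle_trans.
    - apply (Rpow_mono X (INR (2 * k)) _ (INR (2 * n))); [lra|].
      split; [nra|]. rewrite mult_INR; simpl; nra.
    - rewrite Rpower_pow by lra. eapply Rle_trans; [apply pow_le_exp; lra|].
      rewrite exp_pow_mult, Rmult_1_r. lra. }
  assert (P0 : 0 <= B * (2 * D') ^ k) by (apply Rmult_le_pos; auto; apply pow_le; lra).
  assert (P1 : 0 <= t ^ (2 * k)) by (apply pow_le; lra).
  assert (P2 : 0 <= X ^ (2 * k)) by (apply pow_le; lra).
  assert (P3 : 0 < Rpower X ((2 - alpha) * INR n)) by apply Rpow_pos.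
  apply Rle_trans with (B * (2 * D') ^ k * (exp 1 ^ (2 * k) * INR (Factorial.fact (2 * k))) *
     (INR (2 * n) ^ (2 * n) * exp 1 ^ (2 * k)) * t ^ (2 * k) / INR (Factorial.fact (2 * k))).
  - unfold Rdiv. apply Rmult_le_compat_r; [left; apply Rinv_0_lt_compat; auto|].
    apply Rmult_le_compat_r; auto.
    apply Rmult_le_compat; [apply Rmult_le_pos; auto| lra | |auto].
    apply Rmult_le_compat_l; auto.
  - right. rewrite (pow_mult (exp 1) 2 k), (pow_mult t 2 k).
    replace (2 * D' * exp 1 ^ 4 * t ^ 2) with ((2 * D') * (exp 1 ^ 2) * (exp 1 ^ 2) * (t ^ 2)) by ring.
    rewrite !Rpow_mult_distr. field. lra.
Qed.

Lemma window (G : wgraph) (p : V G) (a b B D' alpha : R) (w W1 : R -> V G -> R) :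
  0 <= alpha <= 2 -> 0 <= B -> 0 <= D' ->
  (forall x r, a <= r <= b -> is_derive (fun s => w s x) r (W1 r x) /\
                              is_derive (fun s => W1 s x) r (Lap G (w r) x)) ->
  (forall x n r, walk nbrs n x p -> a <= r <= b ->
     Rabs (w r x) <= B * Rpower (INR n + 1) ((2 - alpha) * INR n)) ->
  (forall x n, walk nbrs n x p -> Deg G x <= D' * Rpower (INR n + 1) alpha) ->
  forall s0, a <= s0 <= b -> (forall x, w s0 x = 0 /\ W1 s0 x = 0) ->
  forall x s, a <= s <= b -> Rabs (s - s0) <= tau D' -> w s x = 0.
Proof.
  intros Ha HB HD Hder Hbd Hdeg s0 Hs0 Hz x s Hs Hss.
  destruct (connected G x p) as [n W].
  destruct (tau_facts D' HD) as [Tp [Q0 Q1]].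
  assert (Z : Rabs (w s x) <= 0).
  { apply (geom_zero _ (B * INR (2 * n) ^ (2 * n)) (2 * D' * exp 1 ^ 4 * tau D' ^ 2) (n + 1)).
    - lra.
    - apply Rmult_le_pos; auto; apply pow_le, pos_INR.
    - intros k Hk. eapply Rle_trans; [exact (core G p a b B D' alpha w W1 Ha HB HD Hder Hbd Hdeg s0 Hs0 Hz k x n s W Hs)|].
      eapply Rle_trans; [|apply term_bound].
      unfold Rdiv. apply Rmult_le_compat_r; [left; apply Rinv_0_lt_compat, INR_fact_lt_0|].
      apply Rmult_le_compat_l; [apply Gk_nonneg; auto|].
      rewrite <- (Rabs_right ((s - s0) ^ (2 * k))) by (apply Rle_ge, even_pow_nonneg).
      rewrite <- RPow_abs. apply pow_incr. split; [apply Rabs_pos|auto].  all: (auto; lra || lia). }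
  destruct (Req_dec (w s x) 0) as [E|E]; auto.
  pose proof (Rabs_pos_lt _ E); lra.
Qed.

Lemma Lap_zero (G : wgraph) (f : V G -> R) (x : V G) :
  (forall z, f z = 0) -> Lap G f x = 0.
Proof.
  intros H. pose proof (Lap_bound G f x 0 (fun y _ => ltac:(rewrite H, Rabs_R0; lra))
    ltac:(rewrite H, Rabs_R0; lra)).
  pose proof (Rabs_pos (Lap G f x)).
  destruct (Req_dec (Lap G f x) 0) as [E|E]; auto.
  pose proof (Rabs_pos_lt _ E); lra.
Qed.

Lemma W1_zero (G : wgraph) (a b s0 : R) (w W1 : R -> V G -> R) (y : V G) :
  (forall x r, a <= r <= b -> is_derive (fun s => w s x) r (W1 r x) /\
                              is_derive (fun s => W1 s x) r (Lap G (w r) x)) ->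
  a <= 0 <= b -> a <= s0 <= b -> W1 0 y = 0 ->
  (forall c, Rmin 0 s0 <= c <= Rmax 0 s0 -> forall z, w c z = 0) ->
  W1 s0 y = 0.
Proof.
  intros Hder H0 Hs0 Hy Hw.
  assert (Hin : forall c, Rmin 0 s0 <= c <= Rmax 0 s0 -> a <= c <= b)
    by (intros c; unfold Rmin, Rmax; destruct Rle_dec; lra).
  destruct (MVT_gen (fun s => W1 s y) 0 s0 (fun r => Lap G (w r) y)) as [c [Hc Hm]].
  - intros r Hr; apply Hder; apply Hin; lra.
  - intros r Hr; apply continuity_pt_filterlim.
    apply (ex_derive_continuous (K:=R_AbsRing) (V:=R_NormedModule) (fun s => W1 s y)).
    eexists; apply Hder; apply Hin; auto.
  - rewrite Lap_zero in Hm by (apply Hw; auto). lra.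
Qed.

Lemma propagate (G : wgraph) (p : V G) (a b B D' alpha : R) (w W1 : R -> V G -> R) :
  0 <= alpha <= 2 -> 0 <= B -> 0 <= D' ->
  (forall x r, a <= r <= b -> is_derive (fun s => w s x) r (W1 r x) /\
                              is_derive (fun s => W1 s x) r (Lap G (w r) x)) ->
  (forall x n r, walk nbrs n x p -> a <= r <= b ->
     Rabs (w r x) <= B * Rpower (INR n + 1) ((2 - alpha) * INR n)) ->
  (forall x n, walk nbrs n x p -> Deg G x <= D' * Rpower (INR n + 1) alpha) ->
  a <= 0 <= b -> (forall x, w 0 x = 0 /\ W1 0 x = 0) ->
  forall j s, a <= s <= b -> Rabs s <= INR j * tau D' -> forall x, w s x = 0.
Proof.
  intros Ha HB HD Hder Hbd Hdeg H0 Hz0 j.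
  destruct (tau_facts D' HD) as [Tp _].
  induction j as [|j IH]; intros s Hs Hsj x.
  - simpl in Hsj. rewrite Rmult_0_l in Hsj. pose proof (Rabs_pos s).
    assert (s = 0) by (destruct (Req_dec s 0); auto; pose proof (Rabs_pos_lt s H1); lra).
    subst s; apply Hz0.
  - rewrite S_INR in Hsj. pose proof (pos_INR j).
    assert (Hex : exists s0, Rmin 0 s <= s0 <= Rmax 0 s /\ Rabs s0 <= INR j * tau D' /\
                           Rabs (s - s0) <= tau D').
    { destruct (Rle_lt_dec 0 s) as [Hp|Hn].
      - rewrite Rabs_right in Hsj by lra. exists (Rmax 0 (s - tau D')).
        unfold Rmin, Rmax; repeat destruct Rle_dec; repeat split;
          try (rewrite Rabs_right; lra); try (rewrite Rabs_R0; nra); try lra;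
          try (rewrite Rminus_0_r, Rabs_right; lra);
          try (replace (s - (s - tau D')) with (tau D') by ring; rewrite Rabs_right; lra).
      - rewrite Rabs_left in Hsj by lra. exists (Rmin 0 (s + tau D')).
        unfold Rmin, Rmax; repeat destruct Rle_dec; repeat split;
          try (rewrite Rabs_left; lra); try (rewrite Rabs_R0; nra); try lra;
          try (rewrite Rabs_left1; lra);
          try (replace (s - (s + tau D')) with (- tau D') by ring; rewrite Rabs_Ropp, Rabs_right; lra);
          try (rewrite Rminus_0_r, Rabs_left1; lra). }
    destruct Hex as [s0 [Hb0 [Hj Hd]]].
    assert (Hs0 : a <= s0 <= b) by (revert Hb0; unfold Rmin, Rmax; destruct Rle_dec; lra).
    apply (window G p a b B D' alpha w W1) with (s0 := s0); auto.
    intros y; split.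
    + apply IH; auto.
    + apply (W1_zero G a b s0 w W1 y); auto.
      * apply Hz0.
      * intros c Hc z. apply IH.
        -- revert Hc; unfold Rmin, Rmax; destruct Rle_dec; lra.
        -- eapply Rle_trans; [|exact Hj]. revert Hc; unfold Rmin, Rmax;
           destruct Rle_dec; intros; unfold Rabs; repeat destruct Rcase_abs; lra.
Qed.

Lemma inI_conv (T : Rbar) (t r : R) : Rbar_lt 0 T -> inI T t ->
  Rmin 0 t <= r <= Rmax 0 t -> inI T r.
Proof.
  intros HT Ht Hr. unfold inI in *. destruct T as [T'| |]; simpl in *; try tauto.
  revert Hr; unfold Rmin, Rmax; destruct Rle_dec; lra.
Qed.

Lemma Rabs_minus_le (x y : R) : Rabs (x - y) <= Rabs x + Rabs y.
Proof. unfold Rminus; eapply Rle_trans; [apply Rabs_triang|]; rewrite Rabs_Ropp; lra. Qed.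

Theorem theorem1p2 (G : wgraph) (p : V G) (D alpha : R) (T : Rbar)
  (HD : 0 < D) (Ha0 : 0 <= alpha) (Ha2 : alpha <= 2)
  (Hdeg : forall (x : V G) (n : nat), x <> p -> is_dist G x p n ->
            Deg G x <= D * Rpower (INR n) alpha)
  (HT : Rbar_lt 0 T)
  (f : R -> V G -> R) (g h : V G -> R) (u v : R -> V G -> R)
  (Hf : C0t G T f)
  (HuM : MT G p alpha T u) (HvM : MT G p alpha T v)
  (Hu : wave_sol G T f g h u) (Hv : wave_sol G T f g h v) :
  forall t x, inI T t -> u t x = v t x.
Proof.
  intros t x Ht.
  destruct Hu as [Cu2 [Ueq [Ug Uh]]]. destruct Hv as [Cv2 [Veq [Vg Vh]]].
  destruct HuM as [Cu HCu]. destruct HvM as [Cv HCv].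
  set (a := Rmin 0 t). set (b := Rmax 0 t).
  assert (HI : forall r, a <= r <= b -> inI T r) by (intros; apply (inI_conv T t); auto).
  set (w := fun s y => u s y - v s y).
  set (W1 := fun s y => Derive (fun s => u s y) s - Derive (fun s => v s y) s).
  assert (Hder : forall y r, a <= r <= b -> is_derive (fun s => w s y) r (W1 r y) /\
                              is_derive (fun s => W1 s y) r (Lap G (w r) y)).
  { intros y r Hr. destruct (Cu2 y r (HI r Hr)) as [U1 [U2 _]].
    destruct (Cv2 y r (HI r Hr)) as [V1 [V2 _]]. split.
    - exact (is_derive_minus _ _ _ _ _ (Derive_correct _ _ U1) (Derive_correct _ _ V1)).
    - replace (Lap G (w r) y) with
        (Derive (Derive (fun s => u s y)) r - Derive (Derive (fun s => v s y)) r).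
      + exact (is_derive_minus _ _ _ _ _ (Derive_correct _ _ U2) (Derive_correct _ _ V2)).
      + unfold w. rewrite Lap_minus.
        pose proof (Ueq r y (HI r Hr)). pose proof (Veq r y (HI r Hr)).
        change (Derive_n (fun s => u s y) 2 r) with (Derive (Derive (fun s => u s y)) r) in H.
        change (Derive_n (fun s => v s y) 2 r) with (Derive (Derive (fun s => v s y)) r) in H0.
        lra. }
  assert (Hab : a <= b) by (unfold a, b, Rmin, Rmax; destruct Rle_dec; lra).
  assert (H0ab : a <= 0 <= b) by (unfold a, b, Rmin, Rmax; destruct Rle_dec; lra).
  destruct (continuity_ab_maj (fun r => Rabs (w r p)) a b Hab) as [xm [Hxm _]].
  { intros c Hc. apply continuity_pt_filterlim.
    apply (continuous_Rabs_comp (fun r => w r p)).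
    apply (ex_derive_continuous (K:=R_AbsRing) (V:=R_NormedModule) (fun r => w r p)).
    exists (W1 c p); exact (proj1 (Hder p c Hc)). }
  set (B := Rabs Cu + Rabs Cv + Rabs (w xm p)).
  set (D' := D + Rabs (Deg G p)).
  assert (HB : 0 <= B) by (unfold B; pose proof (Rabs_pos Cu); pose proof (Rabs_pos Cv);
                           pose proof (Rabs_pos (w xm p)); lra).
  assert (HD' : 0 <= D') by (unfold D'; pose proof (Rabs_pos (Deg G p)); lra).
  assert (Hbd : forall y n r, walk nbrs n y p -> a <= r <= b ->
     Rabs (w r y) <= B * Rpower (INR n + 1) ((2 - alpha) * INR n)).
  { intros y n r W Hr. pose proof (pos_INR n).
    assert (R1 : 1 <= Rpower (INR n + 1) ((2 - alpha) * INR n)) by (apply Rpow_ge1; [lra|apply Rmult_le_pos; lra]).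
    destruct (classic (y = p)) as [E|E].
    - subst y. eapply Rle_trans; [apply (Hxm r Hr)|].
      apply Rle_trans with B; [unfold B; pose proof (Rabs_pos Cu); pose proof (Rabs_pos Cv); lra|].
      rewrite <- (Rmult_1_r B) at 1. apply Rmult_le_compat_l; auto.
    - destruct (walk_dist G y p n W) as [d [Hd Hdist]].
      assert (Hd1 : (1 <= d)%nat).
      { destruct d; [|lia]. exfalso; apply E; apply walk0_eq; apply Hdist. }
      assert (Rm : Rpower (INR d) ((2 - alpha) * INR d) <= Rpower (INR n + 1) ((2 - alpha) * INR n)).
      { apply le_INR in Hd; apply le_INR in Hd1; simpl in Hd1. apply Rpow_mono; [lra|].
        split; [apply Rmult_le_pos; lra|]. apply Rmult_le_compat_l; lra. }
      pose proof (HCu r y d (HI r Hr) E Hdist). pose proof (HCv r y d (HI r Hr) E Hdist).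
      pose proof (Rpow_pos (INR d) ((2 - alpha) * INR d)).
      unfold w. eapply Rle_trans; [apply Rabs_minus_le|].
      assert (Cu * Rpower (INR d) ((2 - alpha) * INR d) <= Rabs Cu * Rpower (INR n + 1) ((2 - alpha) * INR n)).
      { eapply Rle_trans; [apply Rmult_le_compat_r; [lra|apply Rle_abs]|].
        apply Rmult_le_compat_l; auto; apply Rabs_pos. }
      assert (Cv * Rpower (INR d) ((2 - alpha) * INR d) <= Rabs Cv * Rpower (INR n + 1) ((2 - alpha) * INR n)).
      { eapply Rle_trans; [apply Rmult_le_compat_r; [lra|apply Rle_abs]|].
        apply Rmult_le_compat_l; auto; apply Rabs_pos. }
      assert (Rabs Cu + Rabs Cv <= B) by (unfold B; pose proof (Rabs_pos (w xm p)); lra).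
      assert (0 < Rpower (INR n + 1) ((2 - alpha) * INR n)) by apply Rpow_pos.
      apply Rle_trans with ((Rabs Cu + Rabs Cv) * Rpower (INR n + 1) ((2 - alpha) * INR n)).
      + rewrite Rmult_plus_distr_r; lra.
      + apply Rmult_le_compat_r; lra. }
  assert (Hdg : forall y n, walk nbrs n y p -> Deg G y <= D' * Rpower (INR n + 1) alpha).
  { intros y n W. pose proof (pos_INR n).
    assert (R1 : 1 <= Rpower (INR n + 1) alpha) by (apply Rpow_ge1; lra).
    pose proof (Rabs_pos (Deg G p)).
    destruct (classic (y = p)) as [E|E].
    - subst y. unfold D'. pose proof (Rle_abs (Deg G p)).
      apply Rle_trans with (Rabs (Deg G p) * Rpower (INR n + 1) alpha).
      + pose proof (Deg_nonneg G p). rewrite <- (Rmult_1_r (Deg G p)) at 1. apply Rmult_le_compat; lra.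
      + apply Rmult_le_compat_r; lra.
    - destruct (walk_dist G y p n W) as [d [Hd Hdist]].
      assert (Hd1 : (1 <= d)%nat).
      { destruct d; [|lia]. exfalso; apply E; apply walk0_eq; apply Hdist. }
      assert (Rm : Rpower (INR d) alpha <= Rpower (INR n + 1) alpha).
      { apply le_INR in Hd; apply le_INR in Hd1; simpl in Hd1. apply Rpow_mono; lra. }
      pose proof (Hdeg y d E Hdist). unfold D'.
      apply Rle_trans with (D * Rpower (INR n + 1) alpha).
      + eapply Rle_trans; [eassumption|]. apply Rmult_le_compat_l; lra.
      + apply Rmult_le_compat_r; lra. }
  assert (Hz0 : forall y, w 0 y = 0 /\ W1 0 y = 0).
  { intros y; unfold w, W1; rewrite Ug, Vg, Uh, Vh; split; ring. }
  destruct (tau_facts D' HD') as [Tp _].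
  destruct (INR_unbounded (Rabs t / tau D')) as [j Hj].
  assert (Ht' : Rabs t <= INR j * tau D').
  { apply Rmult_gt_compat_r with (r := tau D') in Hj; auto.
    unfold Rdiv in Hj; rewrite Rmult_assoc, Rinv_l, Rmult_1_r in Hj; lra. }
  assert (Htab : a <= t <= b) by (unfold a, b, Rmin, Rmax; destruct Rle_dec; lra).
  pose proof (propagate G p a b B D' alpha w W1 (conj Ha0 Ha2) HB HD' Hder Hbd Hdg H0ab Hz0 j t Htab Ht' x).
  unfold w in H; lra.
Qed.
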